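(* Let $c\in\mathbb{C}(t)\setminus\{0,1,t\}$ and $F_n$, $P_1$ as in the context. Write $F_n(1,t)=(A_n+O(t),\;t(B_n+O(t)))$ as polynomials in $t$, i.e. $A_n$ is the constant term of the first coordinate of $F_n(1,t)$ and $B_n$ is the coefficient of $t$ in the second coordinate (whose constant term vanishes). Then $A_n=P_1(1,0)^{4^{n-1}}$ for all $n\ge1$, and $\limsup_{n\to\infty}|B_n|^{1/4^{n-1}}\le|P_1(1,0)|$.
   Context: $F_{t_1,t_2}(z,w)=\big((t_1w^2-t_2z^2)^2,\;4t_2zw(w-z)(t_1w-t_2z)\big)$. $C=(c_1,c_2)$ is a pair of coprime homogeneous polynomials in $(t_1,t_2)$ of equal degree with $c(t)=c_1(t,1)/c_2(t,1)$. $F_1=F_{t_1,t_2}(C)/\gcd(F_{t_1,t_2}(C))=(P_1,Q_1)$ (dividing by the gcd of the two coordinates), and $F_{n+1}=F_{t_1,t_2}(F_n)/t_2^2$ (substituting the coordinates of $F_n$ for $(z,w)$); these are pairs of homogeneous polynomials in $(t_1,t_2)$, and $Q_1(1,0)=0$. *)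

(* Defs.v *)
From HB Require Import structures.
From mathcomp Require Import all_boot all_order all_algebra.
From mathcomp Require Import complex fraction.
From mathcomp Require Import all_classical all_reals all_analysis.
Set Implicit Arguments. Unset Strict Implicit. Unset Printing Implicit Defensive.
Import Order.TTheory GRing.Theory Num.Theory.
Local Open Scope ring_scope.

(* Bivariate polynomials in (t1,t2) over a commutative ring K are encoded as
   {poly {poly K}}: the outer variable is t2, the inner variable is t1.
   So t1 = 'X%:P and t2 = 'X. *)
Notation bipoly K := {poly {poly K}}.

Definition bt1 {K : comNzRingType} : bipoly K := ('X)%:P.
Definition bt2 {K : comNzRingType} : bipoly K := 'X.

Definition homog {K : comNzRingType} (d : nat) (p : bipoly K) : Prop :=
  forall i j : nat, (p`_j)`_i != 0 -> (i + j)%N = d.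

Definition bdvd {K : idomainType} (a b : bipoly K) : Prop :=
  exists q : bipoly K, b = q * a.
Definition bcoprime {K : idomainType} (a b : bipoly K) : Prop :=
  forall d : bipoly K, bdvd d a -> bdvd d b -> d \is a GRing.unit.

(* evaluation p(a,b) at a point of K^2 *)
Definition beval {K : comNzRingType} (p : bipoly K) (a b : K) : K :=
  (p.[b%:P]).[a].
(* the univariate polynomial t |-> p(1,t) *)
Definition at1t {K : comNzRingType} (p : bipoly K) : {poly K} :=
  map_poly (fun q : {poly K} => q.[1]) p.
(* the dehomogenization t |-> p(t,1) *)
Definition att1 {K : comNzRingType} (p : bipoly K) : {poly K} := p.[1].

Definition Fmap {K : comNzRingType} (zw : bipoly K * bipoly K)
  : bipoly K * bipoly K :=
  let z := zw.1 in let w := zw.2 in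
  ((bt1 * w ^+ 2 - bt2 * z ^+ 2) ^+ 2,
   4%:R * bt2 * z * w * (w - z) * (bt1 * w - bt2 * z)).

Definition Fstep {K : idomainType} (zw : bipoly K * bipoly K)
  : bipoly K * bipoly K :=
  ((Fmap zw).1 %/ bt2 ^+ 2, (Fmap zw).2 %/ bt2 ^+ 2).

(* Fseq F1 n = F_n for n >= 1 (Fseq F1 1 = F1); the value at n = 0 is unused. *)
Definition Fseq {K : idomainType} (F1 : bipoly K * bipoly K) (n : nat)
  : bipoly K * bipoly K := iter n.-1 Fstep F1.

Definition tofr {K : idomainType} (x : K) : {fraction K} := @FracField.tofrac K x.

(* Main.v *)
Require Import Defs.
From HB Require Import structures.
From mathcomp Require Import all_boot all_order all_algebra.
From mathcomp Require Import complex fraction.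
From mathcomp Require Import all_classical all_reals all_analysis.
From mathcomp Require Import ring lra zify.
Import Order.TTheory GRing.Theory Num.Theory.
Local Open Scope ring_scope.

Lemma coef0_zero (K : idomainType) (X Y g P Q : {poly K}) (m : nat) :
  X`_m != 0 -> (forall i, (i <= m)%N -> Y`_i = 0) -> X = g * P -> Y = g * Q ->
  Q`_0 = 0.
Proof.
move=> Xm Y0 eX eY; case: (eqVneq (Q`_0) 0) => // hQ; exfalso.
have ex : exists i, (i <= m)%N && (g`_i != 0).
  case: (boolP [exists j : 'I_m.+1, g`_j != 0]).
    by move=> /existsP[j gj]; exists j; rewrite gj andbT -ltnS.
  move=> hn; move: Xm; rewrite eX coefM big1 ?eqxx //.
  move=> j _.
  have -> : g`_j = 0.
    case: (eqVneq (g`_j) 0) => // gj; case/negP: hn; apply/existsP; exists j; exact gj.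
  by rewrite mul0r.
case: (ex_minnP ex) => j /andP[jm gj] jmin.
have : Y`_j = 0 by apply: Y0.
rewrite eY coefM big_ord_recr /= subnn big1 ?add0r.
  by move/eqP; rewrite mulf_eq0 (negbTE gj) (negbTE hQ).
move=> [i /= hi] _.
have -> : g`_i = 0.
  case: (eqVneq (g`_i) 0) => // gi.
  have := jmin i; rewrite gi andbT (leq_trans (ltnW hi) jm) => /(_ isT).
  by rewrite leqNgt hi.
by rewrite mul0r.
Qed.

Lemma decompX (K : nzRingType) (p : {poly K}) : p`_0 = 0 -> p = 'X * drop_poly 1 p.
Proof.
move=> h; apply/polyP => i; rewrite coefXM coef_drop_poly.
by case: i => [|i] //=; rewrite addn1.
Qed.

Lemma X_not_unit (K : idomainType) : ~ (('X : {poly K}) \is a GRing.unit).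
Proof. by rewrite poly_unitE size_polyX. Qed.

Lemma Q1_0 (K : idomainType) (c1 c2 g P1 Q1 : bipoly K) :
  bcoprime c1 c2 ->
  (Fmap (c1, c2)).1 = g * P1 -> (Fmap (c1, c2)).2 = g * Q1 -> Q1`_0 = 0.
Proof.
move=> cop eX eY.
case: (eqVneq c2`_0 0) => h2.
- have e2 := @decompX _ c2 h2; set d := drop_poly 1 c2 in e2.
  have h1 : c1`_0 != 0.
    apply/eqP => h1; have e1 := @decompX _ c1 h1.
    apply: (@X_not_unit {poly K}); apply: cop.
      by exists (drop_poly 1 c1); rewrite mulrC.
    by exists d; rewrite mulrC.
  apply: (@coef0_zero _ _ _ _ _ _ 2 _ _ eX eY).
  + rewrite /Fmap /= e2.
    have -> : (bt1 * ('X * d) ^+ 2 - bt2 * c1 ^+ 2) ^+ 2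
       = 'X^2 * (bt1 * 'X * d ^+ 2 - c1 ^+ 2) ^+ 2 :> bipoly K.
      by rewrite /bt2; ring.
    rewrite coefXnM /= subnn -horner_coef0 !hornerE horner_coef0.
    by rewrite expf_neq0 // oppr_eq0 expf_neq0.
  + move=> i hi; rewrite /Fmap /= e2.
    have -> : 4%:R * bt2 * c1 * ('X * d) * ('X * d - c1) * (bt1 * ('X * d) - bt2 * c1)
       = 'X^3 * (4%:R * c1 * d * ('X * d - c1) * (bt1 * d - c1)) :> bipoly K.
      by rewrite /bt2; ring.
    by rewrite coefXnM ltnS hi.
- apply: (@coef0_zero _ _ _ _ _ _ 0 _ _ eX eY).
  + rewrite /Fmap /= -horner_coef0 /bt1 /bt2 !hornerE horner_coef0.
    by rewrite subr0 expf_neq0 // !mulf_neq0 ?polyX_eq0.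
  + move=> i; rewrite leqn0 => /eqP ->.
    rewrite /Fmap /= -horner_coef0 /bt2 !hornerE.
    done.
Qed.

Definition Gstep {K : comNzRingType} (p : bipoly K * bipoly K) : bipoly K * bipoly K :=
  ((bt1 * bt2 * p.2 ^+ 2 - p.1 ^+ 2) ^+ 2,
   4%:R * p.1 * p.2 * (bt2 * p.2 - p.1) * (bt1 * p.2 - p.1)).

Lemma Fstep_G (K : idomainType) (z w : bipoly K) :
  Fstep (z, bt2 * w) = ((Gstep (z, w)).1, bt2 * (Gstep (z, w)).2).
Proof.
rewrite /Fstep /Fmap /Gstep /=; congr pair.
  have -> : (bt1 * (bt2 * w) ^+ 2 - bt2 * z ^+ 2) ^+ 2
     = (bt1 * bt2 * w ^+ 2 - z ^+ 2) ^+ 2 * bt2 ^+ 2 :> bipoly K by ring.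
  by rewrite Pdiv.IdomainMonic.mulpK // /bt2 monicXn.
have -> : 4%:R * bt2 * z * (bt2 * w) * (bt2 * w - z) * (bt1 * (bt2 * w) - bt2 * z)
   = bt2 * (4%:R * z * w * (bt2 * w - z) * (bt1 * w - z)) * bt2 ^+ 2 :> bipoly K by ring.
by rewrite Pdiv.IdomainMonic.mulpK // /bt2 monicXn.
Qed.

Lemma iter_G (K : idomainType) (z w : bipoly K) k :
  iter k Fstep (z, bt2 * w) = ((iter k Gstep (z, w)).1, bt2 * (iter k Gstep (z, w)).2).
Proof.
elim: k => [//|k IH]; rewrite !iterS IH; case: (iter k Gstep (z, w)) => a b.
exact: Fstep_G.
Qed.

Lemma beval0 (K : comNzRingType) (p : bipoly K) : beval p 1 0 = (p.[0]).[1].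
Proof. by rewrite /beval polyC0. Qed.

Lemma at1t_0 (K : comNzRingType) (p : bipoly K) : (at1t p)`_0 = beval p 1 0.
Proof. by rewrite /at1t coef_map_id0 ?horner0 // beval0 horner_coef0. Qed.

Lemma at1t_1 (K : comNzRingType) (p : bipoly K) : (at1t (bt2 * p))`_1 = beval p 1 0.
Proof. by rewrite /at1t coef_map_id0 ?horner0 // coefXM /= beval0 horner_coef0. Qed.

Lemma beval_G (K : comNzRingType) (p : bipoly K * bipoly K) :
  beval (Gstep p).1 1 0 = (beval p.1 1 0) ^+ 4 /\
  beval (Gstep p).2 1 0 = 4%:R * beval p.1 1 0 ^+ 2 * beval p.2 1 0 * (beval p.1 1 0 - beval p.2 1 0).
Proof.
rewrite !beval0 /Gstep /bt1 /bt2; cbn [fst snd]; rewrite -[4%:R : bipoly K]polyC_natr -[4%:R : {poly K}]polyC_natr; split; rewrite ![in LHS]hornerE.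
  by rewrite sqrrN -exprM.
ring.
Qed.
Local Open Scope classical_set_scope.
Local Open Scope ring_scope.

Lemma bern (R : realFieldType) (x y : R) m : 0 <= x -> 0 <= y ->
  x ^+ m <= (x + y) ^+ m /\ m.+1%:R * x ^+ m * y <= (x + y) ^+ m.+1.
Proof.
move=> x0 y0; elim: m => [|m [IH1 IH2]].
  rewrite !expr0 expr1 mul1r; split => //; lra.
have h2 : x ^+ m.+1 <= (x + y) ^+ m.+1.
  by rewrite !exprS ler_pM // ?exprn_ge0 // lerDl.
split => //.
have hP := exprn_ge0 m x0.
move: IH2 h2; rewrite [x ^+ m.+1]exprS [(x + y) ^+ m.+2]exprS.
set P := x ^+ m; set Q := (x + y) ^+ m.+1.
have -> : m.+2%:R = m.+1%:R + 1 :> R by rewrite mulrS addrC.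
set M := m.+1%:R.
move=> h1 h2; nra.
Qed.

Lemma wbound (R : realType) (al T b : R) k : 0 <= al -> 0 <= T -> 0 <= b ->
  b <= T ^+ (2 ^ k) * al ^+ (4 ^ k - 2 ^ k) ->
  b `^ ((4 ^ k)%:R)^-1 <= al + T * (2^-1) ^+ k.
Proof.
move=> al0 T0 b0 hb.
set m := (2 ^ k)%N.
have m0 : (0 < m)%N by rewrite expn_gt0.
have e4 : (4 ^ k = m * m)%N by rewrite /m -expnMn.
have em : (2^-1 : R) ^+ k = (m%:R)^-1 by rewrite exprVn natrX.
rewrite em e4 in hb *.
set w := al + T * (m%:R)^-1.
have w0 : 0 <= w by rewrite addr_ge0 // mulr_ge0 // invr_ge0.
have hw : T * al ^+ m.-1 <= w ^+ m.
  have Ti : 0 <= T * (m%:R)^-1 by rewrite mulr_ge0 // invr_ge0.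
  have [_ h] := @bern R al (T * (m%:R)^-1) m.-1 al0 Ti.
  rewrite prednK // in h; apply: le_trans h.
  have mn0 : (m%:R : R) != 0 by rewrite pnatr_eq0 -lt0n.
  have -> : m%:R * al ^+ m.-1 * (T * (m%:R)^-1) = T * al ^+ m.-1 by field.
  by [].
have hN : b <= w ^+ (m * m).
  apply: (le_trans hb); rewrite exprM.
  have -> : T ^+ m * al ^+ (m * m - m) = (T * al ^+ m.-1) ^+ m.
    rewrite exprMn -exprM; congr (_ * al ^+ _).
    by case: (m) m0 => // m' _; rewrite mulSn addKn mulnC.
  by rewrite lerXn2r // ?nnegrE ?mulr_ge0 ?exprn_ge0 // (le_trans _ hw) // mulr_ge0 ?exprn_ge0.
have N0 : ((m * m)%:R : R) != 0 by rewrite pnatr_eq0 muln_eq0 negb_or -lt0n m0.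
apply: (le_trans (ge0_ler_powR _ _ _ hN)); rewrite ?nnegrE ?invr_ge0 ?exprn_ge0 //.
by rewrite -powR_mulrn // -powRrM mulfV // powRr1.
Qed.

Lemma tbound (R : realType) (al : R) (be : nat -> R) :
  0 <= al -> (forall k, 0 <= be k) ->
  (forall k, be k.+1 <= 4%:R * (al ^+ (4 ^ k)) ^+ 2 * be k * (be k + al ^+ (4 ^ k))) ->
  forall k, 4%:R * (al ^+ (4 ^ k) + be k) <=
    (4%:R * (al + be 0)) ^+ (2 ^ k) * al ^+ (4 ^ k - 2 ^ k).
Proof.
move=> al0 be0 hrec; set T := 4%:R * (al + be 0).
elim=> [|k IH]; first by rewrite !expn0 subnn !expr1 expr0 mulr1.
set u := al ^+ (4 ^ k).
have u0 : 0 <= u by rewrite exprn_ge0.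
have hk := hrec k; rewrite -/u in hk.
have bk := be0 k.
have eu : al ^+ (4 ^ k.+1) = u ^+ 4 by rewrite expnS mulnC exprM.
rewrite eu.
set t := 4%:R * (u + be k) in IH.
have t0 : 0 <= t by rewrite mulr_ge0 // addr_ge0.
have step1 : 4%:R * (u ^+ 4 + be k.+1) <= u ^+ 2 * t ^+ 2.
  apply: (@le_trans _ _ (4%:R * (u ^+ 4 + 4%:R * u ^+ 2 * be k * (be k + u)))).
    by rewrite ler_wpM2l // lerD2l.
  rewrite -subr_ge0.
  have -> : u ^+ 2 * t ^+ 2 - 4%:R * (u ^+ 4 + 4%:R * u ^+ 2 * be k * (be k + u))
    = u ^+ 2 * (12%:R * u ^+ 2 + 16%:R * u * be k) by rewrite /t; ring.
  by rewrite mulr_ge0 ?exprn_ge0 // addr_ge0 // ?mulr_ge0 ?exprn_ge0.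
apply: (le_trans step1).
set Bd := T ^+ (2 ^ k) * al ^+ (4 ^ k - 2 ^ k) in IH.
have step2 : t ^+ 2 <= Bd ^+ 2 by rewrite lerXn2r // nnegrE (le_trans t0 IH).
apply: (le_trans (ler_wpM2l (exprn_ge0 2 u0) step2)).
rewrite /Bd /u exprMn -!exprM mulrCA -exprD.
have le24 : (2 ^ k <= 4 ^ k)%N by rewrite -[4%N]/(2 * 2)%N expnMn leq_pmulr // expn_gt0.
have -> : (4 ^ k * 2 + (4 ^ k - 2 ^ k) * 2 = 4 ^ k.+1 - 2 ^ k.+1)%N.
  rewrite !expnS; move: le24; set a := (2 ^ k)%N; set b := (4 ^ k)%N; lia.
by rewrite -expnSr.
Qed.

Lemma limsup_bound (R : realType) (al : R) (be : nat -> R) (f : nat -> R) :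
  0 <= al -> (forall k, 0 <= be k) ->
  (forall k, be k.+1 <= 4%:R * (al ^+ (4 ^ k)) ^+ 2 * be k * (be k + al ^+ (4 ^ k))) ->
  (forall k, f k.+1 = be k) ->
  (limn_esup (fun n : nat => ((f n) `^ ((4 ^ n.-1)%:R)^-1)%:E) <= al%:E)%E.
Proof.
move=> al0 be0 hrec hf.
have tb := @tbound R al be al0 be0 hrec.
set T := 4%:R * (al + be 0) in tb.
have T0 : 0 <= T by rewrite mulr_ge0 // addr_ge0.
have bb k : be k <= T ^+ (2 ^ k) * al ^+ (4 ^ k - 2 ^ k).
  apply: le_trans (tb k); have := be0 k; have : 0 <= al ^+ (4 ^ k) by rewrite exprn_ge0.
  lra.
have wb k : f k.+1 `^ ((4 ^ k)%:R)^-1 <= al + T * (2^-1) ^+ k.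
  by rewrite hf; apply: wbound.
set v := fun n : nat => (al + geometric (2 * T) (2^-1) n)%:E.
have vcv : v @ \oo --> al%:E.
  apply: cvg_EFin; first exact: nearW.
  rewrite -[X in _ --> X]addr0; apply: cvgD; first exact: cvg_cst.
  by apply: cvg_geometric; rewrite ger0_norm ?invr_ge0 // invf_lt1 // ltr1n.
rewrite limn_esup_lim.
have [_ <-] := cvg_limn_einf_sup vcv.
rewrite limn_esup_lim.
apply: lee_lim; [exact: is_cvg_esups | exact: is_cvg_esups |].
exists 1%N => // n /= hn.
apply: ge_ereal_sup => _ [k nk <-].
apply: (@le_trans _ _ (v k)); last by apply: ereal_sup_ubound; exists k.
case: k nk => [|k] /= nk; first by move: (leq_trans hn nk).
rewrite /v /= lee_fin; apply: le_trans (wb k) _.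
by rewrite exprS mulrA -[2 * T * 2^-1]mulrA [T * 2^-1]mulrC mulrA mulfV ?mul1r.
Qed.

Lemma nrE (R : realType) (x : R[i]) : `|x| = (complex.Re `|x|)%:C%C.
Proof. by rewrite normc_def. Qed.

Lemma nr_ge0 (R : realType) (x : R[i]) : 0 <= complex.Re `|x|.
Proof. by rewrite -ler0c -nrE. Qed.

Theorem lemma4p2 (R : realType) (d : nat) (c1 c2 : bipoly R[i])
    (g P1 Q1 : bipoly R[i]) :
  homog d c1 -> homog d c2 -> bcoprime c1 c2 ->
  let c : {fraction {poly R[i]}} := tofr (att1 c1) / tofr (att1 c2) in
  c <> 0 -> c <> 1 -> c <> tofr 'X ->
  (Fmap (c1, c2)).1 = g * P1 -> (Fmap (c1, c2)).2 = g * Q1 ->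
  bcoprime P1 Q1 ->
  let A := fun n : nat => (at1t (Fseq (P1, Q1) n).1)`_0 in
  let B := fun n : nat => (at1t (Fseq (P1, Q1) n).2)`_1 in
  (forall n : nat, (1 <= n)%N -> A n = beval P1 1 0 ^+ (4 ^ n.-1)) /\
  (limn_esup (fun n : nat =>
      ((complex.Re `|B n|) `^ ((4 ^ n.-1)%:R)^-1)%:E)
     <= (complex.Re `|beval P1 1 0|)%:E)%E.
Proof.
move=> _ _ cop c _ _ _ eX eY _ A B.
have q0 := @Q1_0 _ _ _ _ _ _ cop eX eY.
have eQ := @decompX _ Q1 q0; set Q' := drop_poly 1 Q1 in eQ.
have key k : Fseq (P1, Q1) k.+1 =
    ((iter k Gstep (P1, Q')).1, bt2 * (iter k Gstep (P1, Q')).2).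
  by rewrite /Fseq /= eQ -iter_G.
set a := beval P1 1 0.
have an k : beval (iter k Gstep (P1, Q')).1 1 0 = a ^+ (4 ^ k).
  elim: k => [|k IH]; first by rewrite expn0 expr1.
  by rewrite iterS (beval_G _ _).1 IH -exprM -expnSr.
split.
  by move=> [|n] // _; rewrite /A key at1t_0 an.
set be := fun k => complex.Re `|beval (iter k Gstep (P1, Q')).2 1 0|.
apply: (@limsup_bound R _ be).
- exact: nr_ge0.
- by move=> k; exact: nr_ge0.
- move=> k; rewrite /be iterS (beval_G _ _).2 an.
  set y := beval (iter k Gstep (P1, Q')).2 1 0.
  rewrite -lecR !rmorphM rmorph_nat rmorphD !rmorphXn -!nrE.
  apply: (@le_trans _ _ (4%:R * `|a ^+ (4 ^ k)| ^+ 2 * `|y| * (`|y| + `|a ^+ (4 ^ k)|))).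
    rewrite !normrM normrX normr_nat.
    rewrite ler_wpM2l ?mulr_ge0 ?exprn_ge0 //.
    by apply: le_trans (ler_normB _ _) _; rewrite addrC normrX.
  rewrite normrX (nrE _ y) (nrE _ a); exact: lexx.
- by move=> k; rewrite /B key at1t_1.
Qed.
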